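(* Let $R,S$ be finite nonempty sets, $k$ a positive integer, $p_r>0$ ($r\in R$), $T=\sum_{r\in R}p_r$. Let $d_r\ge0$ ($r\in R$), not all zero, be a distribution of distances, with $\alpha=\frac{\sum_{r\in R}p_rd_r}{\sum_{r\in R}p_rd_r^2}$ and population-weighted mean $\mu_D=\frac1T\sum_{r\in R}p_rd_r$. Let $\epsilon<0$ and $\kappa=\alpha\epsilon$. Let $U\subseteq S$, $c_s\ge0$ for $s\in U$, and let $X$ be the set of $\mathbf x\in\{0,1\}^S$ with $\sum_{s\in S}x_s=k$; let $\sigma^{max}=\max_{\mathbf x\in X}\sum_{s\in U}c_sx_s$. If $\sigma^{max}\le\mu_D$, then for every $\mathbf x\in X$, \[ q=-\kappa\sum_{s\in U}c_sx_s\le|\epsilon|. \]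
   Context: $\epsilon$ is the Kolm–Pollak inequality-aversion parameter (negative for undesirable quantities like distance) and $\alpha$ its normalizing factor computed from the distribution $D=\{d_r\}$; $q$ is the argument of the exponential in the penalty term of the penalized Kolm–Pollak facility location model, where $x_s$ indicates opening a facility at $s$ and $c_s$ is a distance penalty on less desirable location $s\in U$. *)

(* Defs.v *)
From mathcomp Require Import all_boot all_order all_algebra.
Set Implicit Arguments. Unset Strict Implicit. Unset Printing Implicit Defensive.
Import Order.TTheory GRing.Theory Num.Theory.
Local Open Scope ring_scope.

Definition kp_alpha (F : realFieldType) (Rset : finType) (p d : Rset -> F) : F :=
  (\sum_(r : Rset) p r * d r) / (\sum_(r : Rset) p r * d r ^+ 2).

Definition pop_mean (F : realFieldType) (Rset : finType) (p d : Rset -> F) : F :=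
  (\sum_(r : Rset) p r * d r) / (\sum_(r : Rset) p r).

Definition feasible (Sset : finType) (k : nat) (x : {ffun Sset -> bool}) : bool :=
  (\sum_(s : Sset) (x s : nat))%N == k.

Definition penalty (F : realFieldType) (Sset : finType) (U : {set Sset})
  (c : Sset -> F) (x : {ffun Sset -> bool}) : F :=
  \sum_(s in U) c s * (x s)%:R.

(* sigma^max = max_{x in X} sum_{s in U} c_s x_s
   (fold of max starting at 0; since c >= 0 every penalty is >= 0, so this is
    exactly the maximum whenever X is nonempty) *)
Definition sigma_max (F : realFieldType) (Sset : finType) (k : nat)
  (U : {set Sset}) (c : Sset -> F) : F :=
  \big[Num.max/0]_(x : {ffun Sset -> bool} | feasible k x) penalty U c x.

(* Main.v *)
Require Import Defs.
From mathcomp Require Import all_boot all_order all_algebra.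
From mathcomp Require Import ring lra.
Import Order.TTheory GRing.Theory Num.Theory.
Local Open Scope ring_scope.

Lemma cs_aux (F : realFieldType) (Rset : finType) (p d : Rset -> F) (m : F) :
  \sum_r p r * (d r - m) ^+ 2 =
  \sum_r p r * d r ^+ 2 - (m *+ 2) * \sum_r p r * d r + m ^+ 2 * \sum_r p r.
Proof.
rewrite (eq_bigr (fun r => (p r * d r ^+ 2 - (m *+ 2) * (p r * d r)) + m ^+ 2 * p r));
  last by move=> r _; ring.
by rewrite big_split /= sumrB -!mulr_sumr.
Qed.

Theorem proposition5 (F : realFieldType) (Rset Sset : finType) (k : nat)
  (p d : Rset -> F) (eps : F) (U : {set Sset}) (c : Sset -> F) :
  (0 < #|Rset|)%N -> (0 < #|Sset|)%N -> (0 < k)%N ->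
  (forall r, 0 < p r) ->
  (forall r, 0 <= d r) -> (exists r, d r != 0) ->
  eps < 0 ->
  (forall s, s \in U -> 0 <= c s) ->
  sigma_max k U c <= pop_mean p d ->
  forall x : {ffun Sset -> bool}, feasible k x ->
    - (kp_alpha p d * eps) * penalty U c x <= `|eps|.
Proof.
move=> _ _ _ pp dp [r0 dr0] epsn cp hs x fx.
have hP : penalty U c x <= sigma_max k U c.
  by rewrite /sigma_max (bigD1 x) //= le_max lexx.
set A := \sum_r p r * d r.
set B := \sum_r p r * d r ^+ 2.
set T := \sum_r p r.
have Tpos : 0 < T.
  rewrite /T (bigD1 r0) //= ltr_pwDl ?pp //; apply: sumr_ge0 => r _; exact: ltW.
have Bpos : 0 < B.
  rewrite /B (bigD1 r0) //=; apply: ltr_pwDl.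
    by rewrite mulr_gt0 ?pp // exprn_gt0 // lt_def dr0 dp.
  by apply: sumr_ge0 => r _; apply: mulr_ge0; [exact: ltW | exact: sqr_ge0].
have A0 : 0 <= A by apply: sumr_ge0 => r _; apply: mulr_ge0; [exact: ltW | exact: dp].
have CS : A ^+ 2 <= B * T.
  have h := @cs_aux F Rset p d (A / T).
  have : 0 <= \sum_r p r * (d r - A / T) ^+ 2.
    by apply: sumr_ge0 => r _; apply: mulr_ge0; [exact: ltW | exact: sqr_ge0].
  rewrite h -/A -/B -/T => h0.
  have e : B - A / T *+ 2 * A + (A / T) ^+ 2 * T = (B * T - A ^+ 2) / T.
    by field; rewrite gt_eqF.
  rewrite e in h0; rewrite -subr_ge0.
  by have := mulr_ge0 h0 (ltW Tpos); rewrite divfK // gt_eqF.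
have al0 : 0 <= kp_alpha p d by rewrite /kp_alpha divr_ge0 // ltW.
have hmu : kp_alpha p d * pop_mean p d <= 1.
  rewrite /kp_alpha /pop_mean -/A -/B -/T.
  have -> : A / B * (A / T) = A ^+ 2 / (B * T) by field; rewrite !gt_eqF.
  by rewrite ler_pdivrMr ?mul1r // mulr_gt0.
have h1 : kp_alpha p d * penalty U c x <= 1.
  apply: le_trans hmu; apply: ler_wpM2l => //; exact: le_trans hs.
rewrite ltr0_norm //.
have -> : - (kp_alpha p d * eps) * penalty U c x = (kp_alpha p d * penalty U c x) * (- eps).
  by rewrite mulNr mulrN mulrAC.
rewrite -[X in _ <= X]mul1r; apply: ler_wpM2r => //.
by rewrite oppr_ge0 ltW.
Qed.
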